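(* Let $\Theta_1,\Theta_2,\ldots$ be independent random variables with $\mathbb P(\Theta_j\le\theta)=\theta/(\theta+j-1)$ for $\theta\ge0$ (convention $0/0=1$). For $n\ge1$, let $C_{n,\theta}$ be the composition of $n$ whose binary representation is $(1(\Theta_j\le\theta))_{1\le j\le n}$, and let $(\Pi_{n,\theta},\theta\ge0)$ be the associated partition-valued process. Then for every $n>2$ the process $(\Pi_{n,\theta},\theta\ge0)$ is not a Markov process.
   Context: A composition of $n$ is a sequence of positive integers $(n_1,\ldots,n_k)$ with sum $n$, viewed as $n$ balls in an ordered sequence of $k$ nonempty boxes, the $i$th box containing $n_i$ balls. Its binary representation is the length-$n$ 0/1 sequence formed by concatenating the words $10^{n_1-1},\ldots,10^{n_k-1}$. Given a process $(C_{n,\theta},\theta\ge0)$ of compositions of $n$, the associated partition-valued process $(\Pi_{n,\theta},\theta\ge0)$ is obtained by labelling the $n$ ball positions (left to right) by $\sigma(1),\ldots,\sigma(n)$ for a uniform random permutation $\sigma$ of $[n]$ independent of the compositions (the same $\sigma$ for all $\theta$), and then forgetting the order of the boxes, yielding a partition of $[n]$ into the sets of labels in each box. *)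

(* Defs.v *)
From HB Require Import structures.
From mathcomp Require Import all_boot all_order all_algebra all_fingroup.
From mathcomp Require Import all_classical all_reals all_analysis.
Set Implicit Arguments. Unset Strict Implicit. Unset Printing Implicit Defensive.
Import Order.TTheory GRing.Theory Num.Theory.
Local Open Scope classical_set_scope.
Local Open Scope ring_scope.

Definition partition_n (n : nat) := {set {set 'I_n}}.

(* Given the binary representation b (positions 0..n-1, left to right) of a
   composition, the box index of position p is the number of 1's at positions
   <= p.  (If b has leading 1, as always in binary representations, boxes are
   numbered 1..k.) *)
Definition box_index (n : nat) (b : 'I_n -> bool) (p : 'I_n) : nat :=
  \sum_(q < n | (q <= p)%N) (b q : nat).

(* The partition of [n] obtained by labelling position p with sigma p and
   forgetting the order of the boxes. *)
Definition partition_of_composition (n : nat) (b : 'I_n -> bool)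
    (sigma : {perm 'I_n}) : partition_n n :=
  [set [set sigma q | q : 'I_n & box_index b q == box_index b p] | p : 'I_n].

(* CDF of Theta_{j+1}:  P(Theta_{j+1} <= t) = t / (t + j), with 0/0 = 1. *)
Definition theta_cdf (R : realType) (j : nat) (t : R) : R :=
  if t + j%:R == 0 then 1 else t / (t + j%:R).

(* The partition-valued process: Theta j stands for Theta_{j+1} (0-indexed),
   position p (0-indexed) has bit 1(Theta_{p+1} <= theta). *)
Definition Pi_process (T : Type) (R : realType) (n : nat)
    (Theta : nat -> T -> R) (sigma : T -> {perm 'I_n}) (theta : R) (w : T)
    : partition_n n :=
  partition_of_composition (fun p : 'I_n => (Theta (p : nat) w <= theta))
    (sigma w).

(* Markov property (w.r.t. the natural filtration) of a finite-state process
   X indexed by times theta >= 0, stated via finite-dimensional distributions: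
   for all times 0 <= t_0 < ... < t_k < t' and states,
   P(X_{t_0}=a_0,...,X_{t_k}=a_k, X_{t'}=a') P(X_{t_k}=a_k)
     = P(X_{t_0}=a_0,...,X_{t_k}=a_k) P(X_{t_k}=a_k, X_{t'}=a'). *)
Definition is_Markov d (T : measurableType d) (R : realType)
    (P : probability T R) (S : finType) (X : R -> T -> S) : Prop :=
  forall (k : nat) (t : 'I_k.+1 -> R) (t' : R) (a : 'I_k.+1 -> S) (a' : S),
    (forall i, 0 <= t i) ->
    (forall i j : 'I_k.+1, (i < j)%N -> t i < t j) ->
    t ord_max < t' ->
    let past := \bigcap_(i in [set: 'I_k.+1]) [set w | X (t i) w = a i] in
    let now := [set w | X (t ord_max) w = a ord_max] in
    let fut := [set w | X t' w = a'] in
    (P (past `&` fut) * P now = P past * P (now `&` fut))%E.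

(* Main.v *)
Require Import Defs.
From HB Require Import structures.
From mathcomp Require Import all_boot all_order all_algebra all_fingroup.
From mathcomp Require Import all_classical all_reals all_analysis.
From mathcomp Require Import ring lra.
Set Implicit Arguments. Unset Strict Implicit. Unset Printing Implicit Defensive.

Section Comb.
Variable n : nat.
Implicit Types (b : 'I_n -> bool) (p q : 'I_n).

Lemma box_split b p p' : p <= p' ->
  box_index b p' = box_index b p + \sum_(q < n | p < q <= p') b q.
Proof.
move=> le; rewrite /box_index (bigID (fun q : 'I_n => q <= p)) /=.
congr (_ + _).
  by apply: eq_bigl => q; case: (boolP (q <= p)) => h; rewrite ?andbF ?andbT //; apply: leq_trans le.
by apply: eq_bigl => q; rewrite -ltnNge andbC.
Qed.

Lemma box_eq b p p' : p <= p' ->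
  (box_index b p == box_index b p') = [forall q : 'I_n, (p < q <= p') ==> ~~ b q].
Proof.
move=> le; rewrite (box_split b le) -{1}[box_index b p]addn0 eqn_add2l eq_sym sum_nat_eq0.
by apply: eq_forallb => q; case: (b q); rewrite ?implybF ?implybT.
Qed.

Lemma box_sym_wlog (P : 'I_n -> 'I_n -> bool) b :
  (forall p q, P p q = P q p) ->
  (forall p q, p <= q -> (box_index b p == box_index b q) = P p q) ->
  forall p q, (box_index b p == box_index b q) = P p q.
Proof.
move=> sym H p q; case: (leqP p q) => h; first exact: H.
by rewrite eq_sym sym; apply: H; apply: ltnW.
Qed.

Lemma box_none b : (forall q, 0 < q -> b q = false) ->
  forall p q, box_index b p == box_index b q.
Proof.
move=> H p q; rewrite (box_sym_wlog (P := fun _ _ => true)) // => {}p {}q le.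
rewrite box_eq //; apply/forallP => r; apply/implyP => /andP[h _].
by rewrite H //; apply: leq_ltn_trans h.
Qed.

Lemma box_all b : (forall q, 0 < q -> b q = true) ->
  forall p q, (box_index b p == box_index b q) = (p == q).
Proof.
move=> H; apply: box_sym_wlog; first by move=> p q; rewrite eq_sym.
move=> p q le; rewrite box_eq //.
case: (eqVneq p q) => [->|ne].
  by apply/forallP => r; apply/implyP => /andP[a c]; move: (leq_trans a c); rewrite ltnn.
apply/negbTE/negP => /forallP /(_ q); rewrite leqnn andbT.
have lt : p < q by rewrite ltn_neqAle le andbT; apply/eqP => e; move/eqP: ne; apply; apply: val_inj.
by rewrite lt H //; apply: leq_ltn_trans lt.
Qed.

Lemma box_one b (c : 'I_n) : 0 < c -> (forall q, 0 < q -> b q = (q == c)) ->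
  forall p q, (box_index b p == box_index b q) = ((p < c) == (q < c)).
Proof.
move=> c0 H; apply: box_sym_wlog; first by move=> p q; rewrite eq_sym.
move=> p q le; rewrite box_eq //.
case: (boolP ((p < c) && (c <= q))) => [/andP[pc cq]|nh].
  rewrite pc ltnNge cq /=; apply/negbTE/negP => /forallP /(_ c).
  by rewrite pc cq H // eqxx.
have -> : (p < c) == (q < c).
  move: nh; case: (ltnP p c) => //= h1 h2.
    by rewrite -ltnNge in h2; rewrite h2.
  by rewrite ltnNge (leq_trans h1 le).
apply/forallP => r; apply/implyP => /andP[a e].
rewrite H; last by apply: leq_ltn_trans a.
apply/negP => /eqP er; move: nh; rewrite -er a /=.
by rewrite e.
Qed.

End Comb.

Section C.
Variable n : nat.
Implicit Types (b : 'I_n -> bool) (p q : 'I_n) (s : {perm 'I_n}).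

Lemma block_mem b s p q :
  (s q \in [set s r | r : 'I_n & box_index b r == box_index b p]) =
  (box_index b q == box_index b p).
Proof. by rewrite mem_imset ?inE //; exact: perm_inj. Qed.

Lemma block_memV b s p y :
  (y \in [set s r | r : 'I_n & box_index b r == box_index b p]) =
  (box_index b ((s^-1)%g y) == box_index b p).
Proof. by rewrite -{1}(permKV s y) block_mem. Qed.

Lemma predP (q : 'I_n) : 0 < q -> q.-1 < n.
Proof. by move=> h; apply: leq_ltn_trans (ltn_ord q); apply: leq_pred. Qed.

Lemma prev_box b (q : 'I_n) (h : 0 < q) :
  (box_index b (Ordinal (predP h)) == box_index b q) = ~~ b q.
Proof.
rewrite box_eq /=; last by apply: leq_pred.
apply/forallP/idP => [/(_ q)|nb r]; first by rewrite prednK // leqnn.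
apply/implyP => /andP[a c]; rewrite prednK // in a.
by have -> : r = q by apply: val_inj; apply/eqP; rewrite eqn_leq a c.
Qed.

Lemma C0 b s : 0 < n ->
  partition_of_composition b s = [set [set: 'I_n]] <-> (forall q, 0 < q -> b q = false).
Proof.
move=> n0; split.
  move=> E q q0; apply/negbTE; rewrite -(prev_box b q0) -(block_mem b s).
  have : [set s r | r : 'I_n & box_index b r == box_index b q] \in partition_of_composition b s.
    by apply: imset_f.
  by rewrite E inE => /eqP ->; rewrite inE.
move=> H; apply/setP => B; rewrite inE; apply/imsetP/eqP => [[p _ ->]|->].
  by apply/setP => y; rewrite block_memV inE box_none.
exists (Ordinal n0) => //; apply/setP => y; by rewrite block_memV inE box_none.
Qed.

Lemma C2 b s :
  partition_of_composition b s = [set [set i] | i : 'I_n] <-> (forall q, 0 < q -> b q = true).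
Proof.
split.
  move=> E q q0; case nb: (b q) => //.
  have : [set s r | r : 'I_n & box_index b r == box_index b q] \in partition_of_composition b s.
    by apply: imset_f.
  rewrite E => /imsetP[i _ Ei].
  have h1 : s q \in [set i] by rewrite -Ei block_mem.
  have h2 : s (Ordinal (predP q0)) \in [set i] by rewrite -Ei block_mem prev_box nb.
  rewrite !inE in h1 h2; move: h2; rewrite -(eqP h1) => /eqP /perm_inj /(congr1 val) /= e.
  by move: q0; rewrite -ltn_predL e ltnn.
move=> H; apply/setP => B; apply/imsetP/imsetP => [[p _ ->]|[i _ ->]].
  exists (s p) => //; apply/setP => y; rewrite block_memV box_all // !inE.
  by apply/eqP/eqP => [<-|->]; rewrite ?permKV ?permK.
exists ((s^-1)%g i) => //; apply/setP => y; rewrite block_memV box_all // !inE.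
by rewrite (inj_eq perm_inj).
Qed.

End C.

Section C1.
Variable k : nat.
Local Notation n := k.+3.
Implicit Types (b : 'I_n -> bool) (p q : 'I_n) (s : {perm 'I_n}).
Definition one : 'I_n := Ordinal (isT : 1 < n).

Lemma blockc b s (c : 'I_n) : 0 < c -> (forall q, 0 < q -> b q = (q == c)) ->
  partition_of_composition b s =
  [set [set y | (s^-1)%g y < c]; [set y | ~~ ((s^-1)%g y < c)]].
Proof.
move=> c0 H; apply/setP => B; apply/imsetP/set2P => [[p _ ->]|[->|->]].
- case: (ltnP p c) => pc; [left|right]; apply/setP => y;
    rewrite block_memV (box_one c0 H) inE.
    by rewrite pc; case: (_ < _).
  by rewrite [p < c]ltnNge pc /=; case: (_ < _).
- exists ord0 => //; apply/setP => y; rewrite block_memV (box_one c0 H) inE c0.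
  by case: (_ < _).
- exists ord_max => //; apply/setP => y; rewrite block_memV (box_one c0 H) inE.
  have -> : (@ord_max k.+2 < c) = false by rewrite ltnNge -ltnS ltn_ord.
  by case: (_ < _).
Qed.

Lemma C1 b s x :
  partition_of_composition b s = [set [set x]; ~: [set x]] <->
  (s ord0 = x /\ (forall q, 0 < q -> b q = (q == one))) \/
  (s ord_max = x /\ (forall q, 0 < q -> b q = (q == ord_max))).
Proof.
split; last first.
  case=> [[sx H]|[sx H]].
    rewrite (blockc s (isT : 0 < one) H).
    have e1 : [set y | (s^-1)%g y < one] = [set x].
      apply/setP => y; rewrite !inE -sx -(inj_eq (@perm_inj _ (s^-1)%g)) permK.
      by rewrite ltnS leqn0 -val_eqE.
    have e2 : [set y | ~~ ((s^-1)%g y < one)] = ~: [set x].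
      apply/setP => y; rewrite !inE -sx -(inj_eq (@perm_inj _ (s^-1)%g)) permK.
      by rewrite ltnS leqn0 -val_eqE.
    by rewrite e1 e2.
  rewrite (blockc s (isT : 0 < (@ord_max k.+2)) H).
  have e1 : [set y | (s^-1)%g y < (@ord_max k.+2)] = ~: [set x].
    apply/setP => y; rewrite !inE -sx -(inj_eq (@perm_inj _ (s^-1)%g)) permK.
    by rewrite ltn_neqAle -ltnS ltn_ord andbT -val_eqE.
  have e2 : [set y | ~~ ((s^-1)%g y < (@ord_max k.+2))] = [set x].
    apply/setP => y; rewrite !inE -sx -(inj_eq (@perm_inj _ (s^-1)%g)) permK.
    by rewrite ltn_neqAle -ltnS ltn_ord andbT -val_eqE negbK.
  by rewrite e1 e2 finset.setUC.
move=> E; set y := (s^-1)%g x.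
have sy : s y = x by rewrite /y permKV.
have hx : [set x] \in partition_of_composition b s by rewrite E set21.
have hc : ~: [set x] \in partition_of_composition b s by rewrite E set22.
case/imsetP: hx => p _ Ep; case/imsetP: hc => p' _ Ep'.
have hy q : (box_index b q == box_index b p) = (q == y).
  by rewrite -(block_mem b s) -Ep inE -sy (inj_eq perm_inj).
have hy' q : (box_index b q == box_index b p') = (q != y).
  by rewrite -(block_mem b s) -Ep' !inE -sy (inj_eq perm_inj).
have A q : (box_index b q == box_index b y) = (q == y).
  have e : box_index b y = box_index b p by apply/eqP; rewrite hy.
  by rewrite e hy.
have B q r : q != y -> r != y -> box_index b q == box_index b r.
  by rewrite -!hy' => /eqP -> /eqP ->.
have [y0|yn0] := eqVneq (val y) 0.
  have ey : y = ord0 by apply: val_inj.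
  left; split; first by rewrite -sy ey.
  move=> q q0; case: (eqVneq q one) => [->|q1].
    case nb: (b one) => //.
    have := prev_box b (isT : 0 < one); rewrite nb /=.
    have -> : Ordinal (predP (isT : 0 < one)) = y by apply: val_inj; rewrite /= y0.
    by rewrite eq_sym A ey.
  have := B one q; rewrite ey => /(_ isT).
  have qy : q != ord0 by rewrite -val_eqE /= -lt0n.
  move=> /(_ qy); rewrite box_eq; last by rewrite /= q0.
  have oq : one < q by rewrite ltn_neqAle q0 andbT; rewrite eq_sym val_eqE q1.
  by move/forallP => /(_ q); rewrite oq leqnn /= => /negbTE ->.
have [ym|ymn] := eqVneq (val y) k.+2.
  have ey : y = ord_max by apply: val_inj.
  right; split; first by rewrite -sy ey.
  move=> q q0; case: (eqVneq q ord_max) => [->|qm].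
    case nb: (b ord_max) => //.
    have := prev_box b (isT : 0 < (@ord_max k.+2)); rewrite nb /=.
    move/eqP => h; move: (A (Ordinal (predP (isT : 0 < (@ord_max k.+2))))).
    by rewrite ey h eqxx -val_eqE /= (ltn_eqF (ltnSn _)).
  have := B ord0 q; rewrite ey => /(_ isT) /(_ qm).
  rewrite box_eq //.
  by move/forallP => /(_ q); rewrite q0 leqnn /= => /negbTE ->.
exfalso.
have y0 : 0 < y by rewrite lt0n.
have yp : y.+1 < n by rewrite ltnS ltn_neqAle ymn -ltnS ltn_ord.
have := B (Ordinal (predP y0)) (Ordinal yp).
have ne1 : Ordinal (predP y0) != y.
  by rewrite -val_eqE /=; case: (val y) y0 => //= m _; rewrite neq_ltn ltnSn.
have ne2 : Ordinal yp != y by rewrite -val_eqE /= neq_ltn ltnSn orbT.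
move=> /(_ ne1 ne2); rewrite box_eq; last by rewrite /= leqW // leq_pred.
move/forallP => H.
have := A (Ordinal (predP y0)); rewrite (negbTE ne1) box_eq; last by rewrite /= leq_pred.
move/negbT/negP; apply; apply/forallP => r; apply/implyP => /andP[a c].
by have := H r; rewrite a /= (leq_trans c (leqnSn _)).
Qed.
End C1.

Import Order.TTheory GRing.Theory Num.Theory.
Local Open Scope classical_set_scope.
Local Open Scope ring_scope.

Section Prob.
Variables (d : measure_display) (T : measurableType d) (R : realType) (P : probability T R).
Variable (Theta : nat -> {RV P >-> R}).
Variable (k : nat).
Local Notation n := k.+3.
Variable (sigma : T -> {perm 'I_n}).
Hypothesis Hcdf : forall (j : nat) (t : R), 0 <= t ->
      P [set w | Theta j w <= t] = (theta_cdf j t)%:E.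
Hypothesis Hind : forall (m : nat) (B : nat -> set R), (forall j, measurable (B j)) ->
      P (\bigcap_(j in [set j : nat | (j < m)%N]) (Theta j @^-1` B j))
      = (\prod_(j < m) P (Theta j @^-1` B j))%E.
Hypothesis Hsm : forall s : {perm 'I_n}, measurable [set w | sigma w = s].
Hypothesis Hsind : forall (s : {perm 'I_n}) (m : nat) (B : nat -> set R),
      (forall j, measurable (B j)) ->
      P ([set w | sigma w = s]
         `&` \bigcap_(j in [set j : nat | (j < m)%N]) (Theta j @^-1` B j))
      = (((n`!)%:R^-1)%:E
        * P (\bigcap_(j in [set j : nat | (j < m)%N]) (Theta j @^-1` B j)))%E.

Definition Ev (Bf : nat -> set R) :=
  \bigcap_(j in [set j : nat | (j < n)%N]) (Theta j @^-1` Bf j).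

Lemma mEv Bf : (forall j, measurable (Bf j)) -> measurable (Ev Bf).
Proof.
move=> mB; apply: bigcap_measurable; first by exists 0%N.
by move=> j _; apply: measurable_funPTI.
Qed.

Lemma msig (l : seq {perm 'I_n}) : measurable [set w | sigma w \in l].
Proof.
elim: l => [|s l IH].
  by have -> : [set w | sigma w \in [::]] = set0 by apply/seteqP; split => w.
have -> : [set w | sigma w \in s :: l] = [set w | sigma w = s] `|` [set w | sigma w \in l].
  apply/seteqP; split => w /=; rewrite in_cons.
    by case/orP => [/eqP ->|h]; [left|right].
  by case => [->|h]; rewrite ?eqxx ?h ?orbT.
exact: measurableU.
Qed.

Lemma P_sig (l : seq {perm 'I_n}) Bf : uniq l -> (forall j, measurable (Bf j)) ->
  P ([set w | sigma w \in l] `&` Ev Bf) =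
  ((size l)%:R * (n`!)%:R^-1 * fine (P (Ev Bf)))%:E.
Proof.
move=> ul mB; elim: l ul => [|s l IH] /=.
  have -> : [set w | sigma w \in [::]] `&` Ev Bf = set0 by apply/seteqP; split => w // [].
  by rewrite measure0 !mul0r.
move=> /andP[sl ul].
have -> : [set w | sigma w \in s :: l] `&` Ev Bf =
   ([set w | sigma w = s] `&` Ev Bf) `|` ([set w | sigma w \in l] `&` Ev Bf).
  apply/seteqP; split => w /=; rewrite in_cons.
    by move=> [/orP[/eqP|] h e]; [left|right].
  by move=> [[-> e]|[h e]]; split => //; rewrite ?eqxx ?h ?orbT.
rewrite measureU; first last.
- apply/seteqP; split => w // [[e _] [h _]]; by move: sl; rewrite -e h.
- by apply: measurableI; [exact: msig|exact: mEv].
- by apply: measurableI; [exact: Hsm|exact: mEv].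
have E1 : P ([set w | sigma w = s] `&` Ev Bf) = (((n`!)%:R^-1)%:E * P (Ev Bf))%E by exact: Hsind.
etransitivity; first exact: (congr1 (fun z => (z + P ([set w | sigma w \in l] `&` Ev Bf))%E) E1).
rewrite (IH ul) -(fineK (fin_num_measure P _ (mEv mB))) /= -EFinM -EFinD.
congr EFin; rewrite -[(size l).+1]addn1 natrD; ring.
Qed.


Lemma mpre j (B : set R) : measurable B -> measurable (Theta j @^-1` B).
Proof. exact: measurable_funPTI. Qed.

Lemma P_le j t : 0 <= t -> P (Theta j @^-1` [set` `]-oo, t]]) = (theta_cdf j t)%:E.
Proof.
move=> t0; rewrite -Hcdf //; congr (P _); apply/seteqP; split => w /=; by rewrite in_itv.
Qed.

Lemma P_T j : P (Theta j @^-1` setT) = 1%:E.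
Proof. by rewrite preimage_setT; exact: probability_setT. Qed.

Lemma P_gt j t : 0 <= t -> P (Theta j @^-1` [set` `]t, +oo[]) = (1 - theta_cdf j t)%:E.
Proof.
move=> t0; set A := Theta j @^-1` [set` `]-oo, t]].
have mA : measurable A by apply: mpre.
have -> : Theta j @^-1` [set` `]t, +oo[] = ~` A.
  apply/seteqP; split => w /=; rewrite !in_itv /= ?andbT.
    by rewrite ltNge => /negP.
  by move=> h; rewrite ltNge; apply/negP.
have := measureU P mA (measurableC mA) (setICr A).
rewrite setUv => H.
have : (1%:E = P A + P (~` A))%E by rewrite -(probability_setT P); exact: H.
clear H; rewrite P_le // -(fineK (fin_num_measure P _ (measurableC mA))) -EFinD.
move=> [] e; congr EFin; lra.
Qed.

Lemma P_oc j a b : 0 <= a -> a <= b ->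
  P (Theta j @^-1` [set` `]a, b]]) = (theta_cdf j b - theta_cdf j a)%:E.
Proof.
move=> a0 ab; set A := Theta j @^-1` [set` `]-oo, a]].
set C := Theta j @^-1` [set` `]a, b]].
have mA : measurable A by apply: mpre.
have mC : measurable C by apply: mpre.
have dj : A `&` C = set0.
  apply/seteqP; split => w // -[]; rewrite /A /C /= !in_itv /= => h1 /andP[h2 _].
  by move: h2; rewrite ltNge h1.
have H := measureU P mA mC dj.
have : (P (A `|` C) = P A + P C)%E by exact: H.
clear H; have -> : A `|` C = Theta j @^-1` [set` `]-oo, b]].
  apply/seteqP; split => w; rewrite /A /C /= !in_itv /=.
    by case=> [h|/andP[_ h]] //; apply: le_trans h ab.
  move=> h; case: (leP (Theta j w) a) => h'; first by left.
  by right; rewrite h.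
rewrite !P_le ?(le_trans a0 ab) // -(fineK (fin_num_measure P _ mC)) -EFinD.
move=> [] e; congr EFin; lra.
Qed.

Lemma cdfE j (t : R) : (0 < j)%N -> 0 <= t -> theta_cdf j t = t / (t + j%:R).
Proof.
move=> j0 t0; rewrite /theta_cdf; case: eqP => // h; exfalso.
have : 0 < t + j%:R by rewrite ltr_wpDl // ltr0n.
lra.
Qed.


Definition X := Pi_process (fun j => (Theta j : T -> R)) sigma.
Definition A0 : partition_n n := [set [set: 'I_n]]%SET.
Definition A1 : partition_n n := [set [set (ord0 : 'I_n)]; ~: [set ord0]]%SET.
Definition AS : partition_n n := [set [set i] | i : 'I_n]%SET.
Definition Bc (wp : bool) : set R :=
  if wp then [set` `]1%:R, 2%:R]] else [set` `]-oo, 2%:R]].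
Definition Bo (wf : bool) : set R :=
  if wf then [set` `]2%:R, 3%:R]] else [set` `]2%:R, +oo[].
Definition Bf (c : nat) wp wf (j : nat) : set R :=
  if j == 0%N then setT else if j == c then Bc wp else Bo wf.

Lemma mBf c wp wf j : measurable (Bf c wp wf j).
Proof.
rewrite /Bf /Bc /Bo; case: (j == 0%N); first exact: measurableT.
by case: (j == c); [case: wp|case: wf]; exact: measurable_itv.
Qed.

Lemma EvP Bf0 w : Ev Bf0 w <-> forall q : 'I_n, Bf0 q (Theta q w).
Proof.
split; first by move=> h q; apply: h; rewrite /= ltn_ord.
by move=> h j /= jn; exact: (h (Ordinal jn)).
Qed.

Lemma per_q (th : R) (wp wf isc : bool) :
  ((wp -> ~~ (th <= 1%:R)) /\ (th <= 2%:R) = isc /\ (wf -> th <= 3%:R)) <->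
  (if isc then Bc wp else Bo wf) th.
Proof.
rewrite /Bc /Bo -ltNge.
case: isc; [case: wp|case: wf]; rewrite /= ?in_itv /=.
- split; first by case=> a [b _]; rewrite (a isT) b.
  case/andP => a b; split; first by move=> _.
  split; first by rewrite b.
  move=> _; lra.
- split; first by case=> _ [b _]; rewrite b.
  move=> b; split; first by [].
  split; first by rewrite b.
  move=> _; lra.
- split; first by case=> _ [/negbT b c]; rewrite -ltNge in b; rewrite b (c isT).
  case/andP => a b; split; first by move=> _; lra.
  split; last by [].
  by apply/negbTE; rewrite -ltNge.
- split; first by case=> _ [/negbT b _]; rewrite -ltNge in b; rewrite b.
  rewrite andbT => a; split; first by move=> _; lra.
  split; last by [].
  by apply/negbTE; rewrite -ltNge.
Qed.


Lemma EvBf (c : nat) (wp wf : bool) w : Ev (Bf c wp wf) w <->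
  forall q : 'I_n, (0 < q)%N ->
   ((wp -> ~~ (Theta q w <= 1%:R)) /\ (Theta q w <= 2%:R) = (val q == c) /\ (wf -> Theta q w <= 3%:R)).
Proof.
rewrite EvP; split => h q.
  move=> q0; apply/per_q; have := h q; rewrite /Bf eqn0Ngt q0 /=.
  by case: (val q == c).
case: (posnP q) => [q0|q0]; first by rewrite /Bf q0.
have := (per_q (Theta q w) wp wf (val q == c)).1 (h q q0).
by rewrite /Bf eqn0Ngt q0 /=; case: (val q == c).
Qed.

Lemma event_eq (wp wf : bool) :
  [set w | (wp -> X 1%:R w = A0) /\ X 2%:R w = A1 /\ (wf -> X 3%:R w = AS)] =
  ([set w | sigma w ord0 = ord0] `&` Ev (Bf 1 wp wf)) `|`
  ([set w | sigma w ord_max = ord0] `&` Ev (Bf k.+2 wp wf)).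
Proof.
apply/seteqP; split => w /=; rewrite /X /Pi_process /A0 /A1 /AS.
  move=> [h0 [h1 h2]].
  have h0' : wp -> forall q : 'I_n, (0 < q)%N -> (Theta q w <= 1%:R) = false.
    by move=> H; apply: (C0 (fun p : 'I_n => Theta p w <= 1%:R) (sigma w) isT).1; apply: h0.
  have h2' : wf -> forall q : 'I_n, (0 < q)%N -> (Theta q w <= 3%:R) = true.
    by move=> H; apply: (C2 (fun p : 'I_n => Theta p w <= 3%:R) (sigma w)).1; apply: h2.
  case/C1: h1 => [[sx H]|[sx H]]; [left|right]; split => //; apply/EvBf => q q0;
    (split; [by move=> /h0' /(_ q q0) ->|split; [rewrite H // -val_eqE //|by move=> /h2' /(_ q q0) ->]]).
move=> h.
have E0 c : Ev (Bf c wp wf) w ->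
    (wp -> partition_of_composition (fun p : 'I_n => Theta p w <= 1%:R) (sigma w) = [set [set: 'I_n]]%SET) /\
    (wf -> partition_of_composition (fun p : 'I_n => Theta p w <= 3%:R) (sigma w) = [set [set i] | i : 'I_n]%SET).
  move=> /EvBf hE; split => H; [apply/(C0 (fun p : 'I_n => Theta p w <= 1%:R) (sigma w) isT) | apply/(C2 (fun p : 'I_n => Theta p w <= 3%:R) (sigma w))] => q q0;
    have [a [b' c']] := hE q q0.
    by apply/negbTE; apply: a.
  by apply: c'.
case: h => -[sx hE]; have [e0 e3] := E0 _ hE; split => //; split => //; apply/C1;
  [left|right]; split => // q q0; have [_ [b' _]] := (EvBf _ _ _ _).1 hE q q0;
  by rewrite b' -val_eqE.
Qed.


Lemma P_sigpred (Q : pred {perm 'I_n}) Bf0 : (forall j, measurable (Bf0 j)) ->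
  P ([set w | Q (sigma w)] `&` Ev Bf0) =
  ((#|Q|)%:R * (n`!)%:R^-1 * fine (P (Ev Bf0)))%:E.
Proof.
move=> mB; rewrite cardE -P_sig ?enum_uniq //; congr (P (_ `&` _)).
by apply/seteqP; split => w /=; rewrite mem_enum.
Qed.

Definition N1 : R := (#|[pred s : {perm 'I_n} | s ord0 == ord0]|)%:R.
Definition N2 : R := (#|[pred s : {perm 'I_n} | s ord_max == ord0]|)%:R.
Definition cc : R := (n`!)%:R^-1.
Definition v (c : nat) (wp wf : bool) : R := fine (P (Ev (Bf c wp wf))).

Lemma P_event (wp wf : bool) :
  P [set w | (wp -> X 1%:R w = A0) /\ X 2%:R w = A1 /\ (wf -> X 3%:R w = AS)] =
  (N1 * cc * v 1 wp wf + N2 * cc * v k.+2 wp wf)%:E.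
Proof.
rewrite event_eq.
set U := [set w | sigma w ord0 = ord0] `&` Ev (Bf 1 wp wf).
set V := [set w | sigma w ord_max = ord0] `&` Ev (Bf k.+2 wp wf).
have mU : measurable U.
  apply: measurableI; last by apply: mEv => j; exact: mBf.
  have -> : [set w | sigma w ord0 = ord0] = [set w | sigma w \in enum [pred s : {perm 'I_n} | s ord0 == ord0]].
    by apply/seteqP; split => w /=; rewrite mem_enum inE => /eqP.
  exact: msig.
have mV : measurable V.
  apply: measurableI; last by apply: mEv => j; exact: mBf.
  have -> : [set w | sigma w ord_max = ord0] = [set w | sigma w \in enum [pred s : {perm 'I_n} | s ord_max == ord0]].
    by apply/seteqP; split => w /=; rewrite mem_enum inE => /eqP.
  exact: msig.
have dj : U `&` V = set0.
  apply/seteqP; split => w // -[[e1 _] [e2 _]].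
  by have /perm_inj /(congr1 val) /eqP := etrans e1 (esym e2).
have H : P (U `|` V) = (P U + P V)%E by exact: measureU.
rewrite H EFinD; congr (_ + _)%E.
  rewrite /U -(P_sigpred [pred s : {perm 'I_n} | s ord0 == ord0]); last exact: mBf.
  by congr (P (_ `&` _)); apply/seteqP; split => w /= /eqP.
rewrite /V -(P_sigpred [pred s : {perm 'I_n} | s ord_max == ord0]); last exact: mBf.
by congr (P (_ `&` _)); apply/seteqP; split => w /= /eqP.
Qed.


Definition F (j : nat) (t : R) := t / (t + j%:R).
Definition Bcv (wp : bool) j := if wp then F j 2%:R - F j 1%:R else F j 2%:R.
Definition Bov (wf : bool) j := if wf then F j 3%:R - F j 2%:R else 1 - F j 2%:R.
Definition pv (c : nat) (wp wf : bool) (j : nat) : R :=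
  if j == 0%N then 1 else if j == c then Bcv wp j else Bov wf j.

Lemma P_Bf c wp wf j : P (Theta j @^-1` Bf c wp wf j) = (pv c wp wf j)%:E.
Proof.
rewrite /Bf /pv; case: (posnP j) => [->|j0]; first exact: P_T.
rewrite /= /Bc /Bo /Bcv /Bov /F.
case: (j == c); [case: wp|case: wf].
- by rewrite P_oc ?ler0n ?ler_nat // !cdfE ?ler0n.
- by rewrite P_le ?ler0n // !cdfE ?ler0n.
- by rewrite P_oc ?ler0n ?ler_nat // !cdfE ?ler0n.
- by rewrite P_gt ?ler0n // !cdfE ?ler0n.
Qed.

Lemma vE c wp wf : v c wp wf = \prod_(j < n) pv c wp wf j.
Proof.
rewrite /v /Ev Hind; last exact: mBf.
by under eq_bigr do rewrite P_Bf; rewrite prodEFin.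
Qed.

Lemma prod_split (g : nat -> R) :
  \prod_(j < n) g j = g 0%N * g 1%N * \prod_(i < k) g i.+2 * g k.+2.
Proof.
rewrite big_ord_recr /= !big_ord_recl /= !mulrA.
done.
Qed.


Definition M (wf : bool) := \prod_(i < k) Bov wf i.+2.

Lemma v1E wp wf : v 1 wp wf = Bcv wp 1 * M wf * Bov wf k.+2.
Proof. by rewrite vE prod_split /pv /= mul1r. Qed.

Lemma v2E wp wf : v k.+2 wp wf = Bov wf 1 * M wf * Bcv wp k.+2.
Proof.
rewrite vE prod_split /pv /= mul1r eqxx; congr (_ * _ * _).
by apply: eq_bigr => i _; rewrite !eqSS (ltn_eqF (ltn_ord i)).
Qed.

Lemma Bov_gt0 wf j : (0 < j)%N -> 0 < Bov wf j.
Proof.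
move=> j0; have x0 : 0 < (j%:R : R) by rewrite ltr0n.
rewrite /Bov /F; case: wf.
  have -> : 3%:R / (3%:R + j%:R) - 2%:R / (2%:R + j%:R) = j%:R / ((3%:R + j%:R) * (2%:R + j%:R)) :> R.
    by field; apply/andP; split; apply: lt0r_neq0; apply: addr_gt0.
  by apply: divr_gt0 => //; apply: mulr_gt0; apply: addr_gt0.
have -> : 1 - 2%:R / (2%:R + j%:R) = j%:R / (2%:R + j%:R) :> R.
  by field; apply: lt0r_neq0; apply: addr_gt0.
by apply: divr_gt0 => //; apply: addr_gt0.
Qed.

Lemma M_gt0 wf : 0 < M wf.
Proof. by apply: prodr_gt0 => i _; apply: Bov_gt0. Qed.


Lemma N1_gt0 : 0 < N1.
Proof. rewrite ltr0n; apply/card_gt0P; exists 1%g; by rewrite inE perm1. Qed.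

Lemma N2_gt0 : 0 < N2.
Proof. rewrite ltr0n; apply/card_gt0P; exists (tperm ord0 ord_max); by rewrite inE tpermR. Qed.

Lemma cc_gt0 : 0 < cc.
Proof. by rewrite invr_gt0 ltr0n fact_gt0. Qed.

Lemma not_markov : ~ is_Markov P X.
Proof.
move=> hM.
have := hM 1%N (fun i : 'I_2 => (i.+1)%:R) 3%:R
  (fun i : 'I_2 => if i == ord0 then A0 else A1) AS.
have h1 : forall i : 'I_2, 0 <= (i.+1)%:R :> R by move=> i; rewrite ler0n.
have h2 : forall i j : 'I_2, (i < j)%N -> (i.+1)%:R < (j.+1)%:R :> R.
  by move=> i j ij; rewrite ltr_nat ltnS.
have h3 : ((@ord_max 1).+1)%:R < 3%:R :> R by rewrite ltr_nat.
move=> /(_ h1 h2 h3); cbv zeta.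
set past := \bigcap_(i in _) _.
set fut := [set w | X 3%:R w = AS].
set now := [set w | _ = _].
have Ep : past = [set w | (true -> X 1%:R w = A0) /\ X 2%:R w = A1 /\ (false -> X 3%:R w = AS)].
  apply/seteqP; split => w /=.
    move=> h; split; first by move=> _; exact: (h ord0 I).
    by split => //; exact: (h ord_max I).
  move=> [e0 [e1 _]] i _; case: i => -[|[|//]] ip /=.
    by rewrite e0.
  by rewrite e1.
have En : now = [set w | (false -> X 1%:R w = A0) /\ X 2%:R w = A1 /\ (false -> X 3%:R w = AS)].
  by apply/seteqP; split => w /=; [move=> h; split => //|case=> _ []].
have Epf : past `&` fut = [set w | (true -> X 1%:R w = A0) /\ X 2%:R w = A1 /\ (true -> X 3%:R w = AS)].
  rewrite Ep; apply/seteqP; split => w /=.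
    by case=> -[e0 [e1 _]] e3; split => //; split.
  by case=> e0 [e1 e3]; split; [split; [exact: e0|split; [exact: e1|case]]|exact: e3 isT].
have Enf : now `&` fut = [set w | (false -> X 1%:R w = A0) /\ X 2%:R w = A1 /\ (true -> X 3%:R w = AS)].
  rewrite En; apply/seteqP; split => w /=.
    by case=> -[_ [e1 _]] e3; split => //.
  by case=> _ [e1 e3]; split; [split; [case|split; [exact: e1|case]]|exact: e3 isT].
rewrite Epf Enf En Ep !P_event -!EFinM => -[].
rewrite !v1E !v2E.
rewrite /Bcv /Bov.
set a1 := F 1 1%:R; set a2 := F 1 2%:R; set a3 := F 1 3%:R.
set b1 := F k.+2 1%:R; set b2 := F k.+2 2%:R; set b3 := F k.+2 3%:R.
set Mq := M false; set Md := M true.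
set K1 := (a2 - a1) * b2 - (b2 - b1) * a2.
set K2 := (b3 - b2) * (1 - a2) - (a3 - a2) * (1 - b2).
move=> H.
have key : N1 * N2 * cc ^+ 2 * Mq * Md * K1 * K2 = 0.
  match type of H with ?L = ?Rr => have e : N1 * N2 * cc ^+ 2 * Mq * Md * K1 * K2 = L - Rr by rewrite /K1 /K2; ring end.
  by rewrite e H subrr.
set m : R := (k.+2)%:R.
have hm : 2%:R <= m by rewrite ler_nat.
have K1E : K1 * (3%:R * (2%:R + m) * (1 + m)) = 1 - m.
  rewrite /K1 /a1 /a2 /b1 /b2 /F -/m; field.
  have k0 : 0 <= (k%:R : R) by rewrite ler0n.
  by repeat (apply/andP; split); apply/eqP => hh; lra.
have K2E : K2 * (12%:R * (2%:R + m) * (3%:R + m)) = m * (1 - m).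
  rewrite /K2 /a2 /a3 /b2 /b3 /F -/m; field.
  have k0 : 0 <= (k%:R : R) by rewrite ler0n.
  by repeat (apply/andP; split); apply/eqP => hh; lra.
have nzK1 : K1 != 0 by apply/eqP => K10; move: K1E; rewrite K10 mul0r; lra.
have nzK2 : K2 != 0 by apply/eqP => K20; move: K2E; rewrite K20 mul0r; nra.
have nzN1 : N1 != 0 by apply: lt0r_neq0; exact: N1_gt0.
have nzN2 : N2 != 0 by apply: lt0r_neq0; exact: N2_gt0.
have nzc : cc ^+ 2 != 0 by apply: expf_neq0; apply: lt0r_neq0; exact: cc_gt0.
have nzMq : Mq != 0 by apply: lt0r_neq0; exact: M_gt0.
have nzMd : Md != 0 by apply: lt0r_neq0; exact: M_gt0.
have := mulf_neq0 (mulf_neq0 (mulf_neq0 (mulf_neq0 (mulf_neq0 (mulf_neq0 nzN1 nzN2) nzc) nzMq) nzMd) nzK1) nzK2.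
by rewrite key eqxx.
Qed.

End Prob.

Theorem mainTheorem2 (d : measure_display) (T : measurableType d)
    (R : realType) (P : probability T R)
    (Theta : nat -> {RV P >-> R}) (n : nat) (sigma : T -> {perm 'I_n}) :
  (* Theta j (= Theta_{j+1} in the paper) has P(Theta_{j+1} <= t) = t/(t+j) *)
  (forall (j : nat) (t : R), 0 <= t ->
      P [set w | Theta j w <= t] = (theta_cdf j t)%:E) ->
  (* Theta_1, Theta_2, ... are mutually independent *)
  (forall (m : nat) (B : nat -> set R), (forall j, measurable (B j)) ->
      P (\bigcap_(j in [set j : nat | (j < m)%N]) (Theta j @^-1` B j))
      = (\prod_(j < m) P (Theta j @^-1` B j))%E) ->
  (* sigma is measurable, uniform on permutations of [n], and independent of
     the whole sequence (Theta_j) *)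
  (forall s : {perm 'I_n}, measurable [set w | sigma w = s]) ->
  (forall (s : {perm 'I_n}) (m : nat) (B : nat -> set R),
      (forall j, measurable (B j)) ->
      P ([set w | sigma w = s]
         `&` \bigcap_(j in [set j : nat | (j < m)%N]) (Theta j @^-1` B j))
      = (((n`!)%:R^-1)%:E
        * P (\bigcap_(j in [set j : nat | (j < m)%N]) (Theta j @^-1` B j)))%E) ->
  (2 < n)%N ->
  ~ is_Markov P (Pi_process (fun j => (Theta j : T -> R)) sigma).
Proof.
move=> Hcdf Hind Hsm Hsind hn.
case: n sigma Hsm Hsind hn => [|[|[|k]]] // sigma Hsm Hsind _.
exact: (not_markov Hcdf Hind Hsm Hsind).
Qed.
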